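(* Let $\xi=e^{i\pi/5}$, $\tau=\frac{1+\sqrt5}{2}$. For $n\in\mathbb{N}_0$ let $Q_2(n)=\{\sum_{j=0}^9 n_j\xi^j: n_j\in\mathbb{N}_0,\ \sum_j n_j\le n\}$ and $L(n)=Q_2(n)\cap\mathbb{R}$. Then $$L(n)=\{(a+c)+(b-c)\tau \mid a,b,c\in\mathbb{Z},\ |a|+2|b|+2|c|\le n\}.$$
   Context: $L(n)$ is denoted $L_{\alpha_1}(n)$ in the paper. *)

(* Defs.v *)
From Stdlib Require Import Reals ZArith List.
From Coquelicot Require Import Coquelicot.
Open Scope R_scope.

Definition xi : C := (cos (PI / 5), sin (PI / 5)).

Definition tau : R := (1 + sqrt 5) / 2.

Definition sum10 {A} (plus : A -> A -> A) (zero : A) (f : nat -> A) : A :=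
  fold_right (fun j acc => plus (f j) acc) zero (seq 0 10).

Definition Q2 (n : nat) (z : C) : Prop :=
  exists m : nat -> nat,
    (sum10 Nat.add 0%nat m <= n)%nat /\
    z = sum10 Cplus (RtoC 0) (fun j => Cmult (RtoC (INR (m j))) (Cpow xi j)).

Definition L (n : nat) (x : R) : Prop := Q2 n (RtoC x).

(* Main.v *)
Require Import Defs.
From Stdlib Require Import Reals ZArith List Lra Lia Psatz.
From Coquelicot Require Import Coquelicot.
Open Scope R_scope.

Lemma sqrt5_sq : sqrt 5 * sqrt 5 = 5.
Proof. apply sqrt_sqrt; lra. Qed.
Lemma sqrt5_gt1 : 1 < sqrt 5.
Proof. rewrite <- sqrt_1. apply sqrt_lt_1_alt; lra. Qed.
Lemma tau_sq : tau * tau = tau + 1.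
Proof. unfold tau. pose proof sqrt5_sq. nra. Qed.

Lemma cos5 : cos (PI/5) = tau / 2.
Proof.
  set (t := PI/5).
  assert (H3 : cos (3*t) = - cos (2*t)).
  { replace (3*t) with (PI - 2*t) by (unfold t; field). apply Rtrigo_facts.cos_pi_minus. }
  replace (3*t) with (2*t + t) in H3 by ring.
  rewrite cos_plus, sin_2a, !cos_2a_cos in H3.
  pose proof (sin2 t) as Hs. unfold Rsqr in Hs.
  assert (Hc : 0 < cos t). { apply cos_gt_0; unfold t; pose proof PI_RGT_0; lra. }
  assert (Hq : 4 * cos t * cos t - 2 * cos t - 1 = 0).
  { assert (E: (cos t + 1) * (4 * cos t * cos t - 2 * cos t - 1) = 0) by nra.
    apply Rmult_integral in E. destruct E; lra. }
  pose proof sqrt5_sq. pose proof sqrt5_gt1. unfold tau.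
  assert (E: (cos t - (1 + sqrt 5)/4) * (cos t - (1 - sqrt 5)/4) = 0) by nra.
  apply Rmult_integral in E. destruct E as [E|E]; nra.
Qed.


Definition s5 := sin (PI/5).
Lemma s5_sq : s5 * s5 = 1 - tau*tau/4.
Proof. unfold s5. pose proof (sin2 (PI/5)) as H. unfold Rsqr in H. rewrite H, cos5. field. Qed.

Lemma xi_eq : xi = (tau/2, s5).
Proof. unfold xi. rewrite cos5. reflexivity. Qed.

Lemma step (x' y' x y : R) j :
  Cpow xi j = (x, y) -> tau/2 * x - s5 * y = x' -> tau/2*y + s5*x = y' -> Cpow xi (S j) = (x', y').
Proof. intros H H1 H2. simpl. rewrite H, xi_eq. unfold Cmult; simpl. rewrite <- H1, <- H2. f_equal; ring. Qed.

Lemma tbl : 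
  Cpow xi 0 = (1,0) /\
  Cpow xi 1 = (tau/2, s5) /\
  Cpow xi 2 = ((tau-1)/2, tau*s5) /\
  Cpow xi 3 = (-((tau-1)/2), tau*s5) /\
  Cpow xi 4 = (-(tau/2), s5) /\
  Cpow xi 5 = (-1, 0) /\
  Cpow xi 6 = (-(tau/2), -s5) /\
  Cpow xi 7 = (-((tau-1)/2), -(tau*s5)) /\
  Cpow xi 8 = ((tau-1)/2, -(tau*s5)) /\
  Cpow xi 9 = (tau/2, -s5).
Proof.
  pose proof s5_sq as S. pose proof tau_sq as T.
  assert (T3 : tau*tau*tau = 2*tau+1) by nra.
  assert (TS : s5*(tau*s5) = tau*(1 - tau*tau/4)) by (rewrite <- S; ring).
  assert (H0 : Cpow xi 0 = (1,0)) by reflexivity.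
  assert (H1 : Cpow xi 1 = (tau/2, s5)).
  { simpl. rewrite xi_eq. unfold Cmult; simpl. f_equal; ring. }
  assert (H2 := step ((tau-1)/2) (tau*s5) _ _ 1 H1). assert (H2' := H2); clear H2; assert (H2 := ltac:(apply H2'; [nra|nra])).
  assert (H3 := step (-((tau-1)/2)) (tau*s5) _ _ 2 H2). assert (H3' := H3); clear H3; assert (H3 := ltac:(apply H3'; [nra|nra])).
  assert (H4 := step (-(tau/2)) s5 _ _ 3 H3). assert (H4' := H4); clear H4; assert (H4 := ltac:(apply H4'; [nra|nra])).
  assert (H5 := step (-1) 0 _ _ 4 H4). assert (H5' := H5); clear H5; assert (H5 := ltac:(apply H5'; [nra|nra])).
  assert (H6 := step (-(tau/2)) (-s5) _ _ 5 H5). assert (H6' := H6); clear H6; assert (H6 := ltac:(apply H6'; [nra|nra])).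
  assert (H7 := step (-((tau-1)/2)) (-(tau*s5)) _ _ 6 H6). assert (H7' := H7); clear H7; assert (H7 := ltac:(apply H7'; [nra|nra])).
  assert (H8 := step ((tau-1)/2) (-(tau*s5)) _ _ 7 H7). assert (H8' := H8); clear H8; assert (H8 := ltac:(apply H8'; [nra|nra])).
  assert (H9 := step (tau/2) (-s5) _ _ 8 H8). assert (H9' := H9); clear H9; assert (H9 := ltac:(apply H9'; [nra|nra])).
  repeat split; assumption.
Qed.


Lemma descent : forall k (q m : Z), (Z.abs_nat q <= k)%nat -> (m*m = 5*q*q)%Z -> q = 0%Z.
Proof.
  induction k; intros q m Hk E.
  - lia.
  - assert (Hm : (m = 5 * (m / 5))%Z).
    { pose proof (Z.div_mod m 5 ltac:(lia)) as D. pose proof (Z.mod_pos_bound m 5 ltac:(lia)).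
      set (t := (m/5)%Z) in *. set (r := (m mod 5)%Z) in *.
      assert (r = 0 \/ r = 1 \/ r = 2 \/ r = 3 \/ r = 4)%Z as R by lia.
      rewrite D in E.
      destruct R as [R|[R|[R|[R|R]]]]; rewrite R in *; try lia;
      exfalso; assert (E' : (r*r = 5 * (q*q - 5*t*t - 2*t*r))%Z) by (rewrite R; lia); rewrite R in E'; lia. }
    set (t := (m/5)%Z) in *.
    assert (E2 : (q*q = 5*t*t)%Z) by (rewrite Hm in E; lia).
    assert (Hq : (q = 5 * (q / 5))%Z).
    { pose proof (Z.div_mod q 5 ltac:(lia)) as D. pose proof (Z.mod_pos_bound q 5 ltac:(lia)).
      set (u := (q/5)%Z) in *. set (r := (q mod 5)%Z) in *.
      assert (r = 0 \/ r = 1 \/ r = 2 \/ r = 3 \/ r = 4)%Z as R by lia.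
      rewrite D in E2.
      destruct R as [R|[R|[R|[R|R]]]]; rewrite R in *; try lia;
      exfalso; assert (E' : (r*r = 5 * (t*t - 5*u*u - 2*u*r))%Z) by (rewrite R; lia); rewrite R in E'; lia. }
    set (u := (q/5)%Z) in *.
    assert (E3 : (t*t = 5*u*u)%Z) by (rewrite Hq in E2; lia).
    destruct (Z.eq_dec q 0) as [|Hn]; [assumption|].
    assert (u = 0%Z). { apply (IHk u t); lia. }
    lia.
Qed.

Lemma irr : forall p q : Z, IZR p + IZR q * tau = 0 -> p = 0%Z /\ q = 0%Z.
Proof.
  intros p q H. unfold tau in H. pose proof sqrt5_sq.
  assert (H2 : IZR q * sqrt 5 = - IZR (2*p+q)) by (rewrite plus_IZR, mult_IZR; simpl; lra).
  assert (H3 : IZR ((2*p+q)*(2*p+q)) = IZR (5*q*q)).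
  { rewrite !mult_IZR. replace (IZR (2*p+q) * IZR (2*p+q)) with ((IZR q * sqrt 5) * (IZR q * sqrt 5)) by (rewrite H2; ring).
    nra. }
  apply eq_IZR in H3.
  assert (q = 0%Z) by (apply (descent (Z.abs_nat q) q (2*p+q)); lia).
  subst q. split; [|reflexivity]. simpl in H. apply eq_IZR. lra.
Qed.

Lemma toR (a : Z) : IZR a = INR (Z.to_nat a) - INR (Z.to_nat (- a)).
Proof.
  rewrite !INR_IZR_INZ. destruct (Z_le_gt_dec 0 a).
  - rewrite Z2Nat.id by lia. replace (Z.to_nat (-a)) with 0%nat by lia. simpl. lra.
  - rewrite (Z2Nat.id (-a)) by lia. replace (Z.to_nat a) with 0%nat by lia. rewrite opp_IZR. simpl. lra.
Qed.


Lemma s5_pos : 0 < s5.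
Proof. unfold s5. apply sin_gt_0; pose proof PI_RGT_0; lra. Qed.

Theorem corollary6p7 : forall (n : nat) (x : R),
  L n x <->
  exists a b c : Z,
    (Z.abs a + 2 * Z.abs b + 2 * Z.abs c <= Z.of_nat n)%Z /\
    x = IZR (a + c) + IZR (b - c) * tau.
Proof.
  intros n x. unfold L, Q2, sum10.
  destruct tbl as (P0&P1&P2&P3&P4&P5&P6&P7&P8&P9).
  cbn [seq fold_right].
  rewrite P0, P1, P2, P3, P4, P5, P6, P7, P8, P9.
  unfold Cplus, Cmult, RtoC; cbn [fst snd].
  split.
  - intros [m [Hs E]].
    injection E as Er Ei.
    rewrite !INR_IZR_INZ in Er, Ei.
    set (k0 := (Z.of_nat (m 0%nat) - Z.of_nat (m 5%nat))%Z).
    set (k1 := (Z.of_nat (m 1%nat) - Z.of_nat (m 6%nat))%Z).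
    set (k2 := (Z.of_nat (m 2%nat) - Z.of_nat (m 7%nat))%Z).
    set (k3 := (Z.of_nat (m 3%nat) - Z.of_nat (m 8%nat))%Z).
    set (k4 := (Z.of_nat (m 4%nat) - Z.of_nat (m 9%nat))%Z).
    assert (I : IZR (k1 + k4) + IZR (k2 + k3) * tau = 0).
    { pose proof s5_pos. apply (Rmult_eq_reg_l s5); [|lra].
      unfold k1, k2, k3, k4. rewrite !plus_IZR, !minus_IZR. lra. }
    apply irr in I. destruct I as [I1 I2].
    exists k0, k1, (- k2)%Z. split.
    + unfold k0, k1, k2, k3, k4 in *. lia.
    + assert (J1 : IZR k4 = - IZR k1) by (rewrite <- opp_IZR; f_equal; lia).
      assert (J2 : IZR k3 = - IZR k2) by (rewrite <- opp_IZR; f_equal; lia).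
      revert J1 J2. rewrite Er. unfold k0, k1, k2, k3, k4.
      rewrite !plus_IZR, !minus_IZR, !opp_IZR, !minus_IZR. intros J1 J2.
      pose proof tau_sq. nra.
  - intros (a & b & c & Hb & Hx).
    exists (fun j => match j with
      | 0 => Z.to_nat a | 5 => Z.to_nat (-a)
      | 1 => Z.to_nat b | 6 => Z.to_nat (-b)
      | 4 => Z.to_nat (-b) | 9 => Z.to_nat b
      | 2 => Z.to_nat (-c) | 7 => Z.to_nat c
      | 3 => Z.to_nat c | 8 => Z.to_nat (-c)
      | _ => 0%nat end).
    split.
    + cbn [fold_right]. lia.
    + pose proof (toR a). pose proof (toR b). pose proof (toR c).
      rewrite Hx, !plus_IZR, !minus_IZR. f_equal; nra.
Qed.
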